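(* In CCS, for every channel $a\in\mathcal{C}$ and all processes $x,y,z$: (1) $x\xrightarrow{\tau}y$ iff $x\to y$; (2) $x\xrightarrow{a}y$ iff $(x,\bar a.\mathbf{0})\to y$; (3) $x\xrightarrow{\bar a}y$ iff $(x,a.\mathbf{0})\to y$; (4) $(x,y)\to z$ iff there exist a channel $b$ and processes $x',y'$ with $z\equiv x'\parallel y'$ and either ($x\xrightarrow{b}x'$ and $y\xrightarrow{\bar b}y'$) or ($x\xrightarrow{\bar b}x'$ and $y\xrightarrow{b}y'$). Here $\xrightarrow{\alpha}$ is the CCS labelled transition relation and $\to$ is the reaction relation of the CCS dialgebra.
   Context: Let $\mathcal{C}$ be a countable set of channels. Prefixes: $\alpha::=\tau\mid a\mid\bar a$ ($a\in\mathcal{C}$). Processes: $P::=\sum_{i\in I}\alpha_i.P_i\mid P_1\parallel P_2\mid(\nu a)P$ with $I$ finite, sums taken up to reordering of summands; $\mathbf{0}$ is the empty sum, $\alpha.P$ a one-summand sum, and $\alpha.P+Q$ denotes a sum having $\alpha.P$ as a summand. Free names: $\mathit{fn}(\tau)=\emptyset$, $\mathit{fn}(a)=\mathit{fn}(\bar a)=\{a\}$, $\mathit{fn}(\sum\alpha_i.P_i)=\bigcup_i(\mathit{fn}(\alpha_i)\cup\mathit{fn}(P_i))$, $\mathit{fn}(P\parallel Q)=\mathit{fn}(P)\cup\mathit{fn}(Q)$, $\mathit{fn}((\nu a)P)=\mathit{fn}(P)\setminus\{a\}$. Structural congruence $\equiv$ is the least congruence containing $\alpha$-conversion of $a$ in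 $(\nu a)P$, the commutative monoid laws for $\parallel$ with unit $\mathbf{0}$, and $(\nu a)(P\parallel Q)\equiv((\nu a)P)\parallel Q$ if $a\notin\mathit{fn}(Q)$, $(\nu a)\mathbf{0}\equiv\mathbf{0}$, $(\nu a)(\nu b)P\equiv(\nu b)(\nu a)P$. The CCS LTS is the least relation $P\xrightarrow{\alpha}P'$ closed under: (pre) $\alpha.P+Q\xrightarrow{\alpha}P$; (res) if $a\notin\mathit{fn}(\alpha)$ and $P\xrightarrow{\alpha}P'$ then $(\nu a)P\xrightarrow{\alpha}(\nu a)P'$; (par) if $P\xrightarrow{\alpha}P'$ then $P\parallel Q\xrightarrow{\alpha}P'\parallel Q$; (syn) if $P\xrightarrow{\bar c}P'$ and $Q\xrightarrow{c}Q'$ then $P\parallel Q\xrightarrow{\tau}P'\parallel Q'$; (str) if $P\equiv Q$, $P'\equiv Q'$ and $P\xrightarrow{\alpha}P'$ then $Q\xrightarrow{\alpha}Q'$. The CCS dialgebra reaction relation consists of the least relations $P\to R$ (processes) and $(P,Q)\to R$ (pairs of processes) closed under: (tau) $\tau.P+Q\to P$; (res) $P\to P'$ implies $(\nu a)P\to(\nu a)P'$; (par$_1$) $P\to P'$ implies $P\parallel Q\to P'\parallel Q$; (int) $(P,Q)\to R$ implies $P\parallel Q\to R$; (hid) $(P,Q)\to R$ and $a\notin\mathit{fn}(Q)$ imply $((\nu a)P,Q)\to(\nu a)R$; (par$_2$) $(P,Q)\to R$ implies $(P\parallel S,Q)\to S\parallel R$; (syn) $(\bar a.P+S,a.Q+T)\to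 P\parallel Q$; (sym) $(P,Q)\to R$ implies $(Q,P)\to R$; (str$_1$) $P\to R$, $P\equiv Q$, $R\equiv S$ imply $Q\to S$; (str$_2$) $(P,Q)\to R$, $P\equiv S$, $Q\equiv T$, $R\equiv U$ imply $(S,T)\to U$. *)

(* Defs.v *)
From Stdlib Require Import List Permutation Arith.
Import ListNotations.

(* Channels: the countable set C is represented by nat. *)
Definition chan := nat.

Inductive prefix : Type :=
| ptau : prefix
| pin : chan -> prefix
| pout : chan -> prefix.

(* Processes: finite guarded sums (list of summands), parallel, restriction. *)
Inductive proc : Type :=
| Sum : list (prefix * proc) -> proc
| Par : proc -> proc -> proc
| Nu : chan -> proc -> proc.

Definition zero : proc := Sum [].
Definition pre (a : prefix) (P : proc) : proc := Sum [(a, P)].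

Definition fn_pre (a : prefix) : list chan :=
  match a with ptau => [] | pin c => [c] | pout c => [c] end.

Fixpoint fn (P : proc) : list chan :=
  match P with
  | Sum l => (fix fl (l : list (prefix * proc)) : list chan :=
                match l with
                | [] => []
                | (a, Q) :: l' => fn_pre a ++ fn Q ++ fl l'
                end) l
  | Par P Q => fn P ++ fn Q
  | Nu a P => remove Nat.eq_dec a (fn P)
  end.

(* Name swapping (a b); used to express alpha-conversion capture-free:
   (nu a)P == (nu b)((a b).P) whenever b is not free in P. *)
Definition swap_name (a b c : chan) : chan :=
  if Nat.eqb c a then b else if Nat.eqb c b then a else c.

Definition swap_pre (a b : chan) (p : prefix) : prefix :=
  match p with
  | ptau => ptau
  | pin c => pin (swap_name a b c)
  | pout c => pout (swap_name a b c)
  end.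

Fixpoint swap (a b : chan) (P : proc) : proc :=
  match P with
  | Sum l => Sum ((fix sl (l : list (prefix * proc)) : list (prefix * proc) :=
                     match l with
                     | [] => []
                     | (p, Q) :: l' => (swap_pre a b p, swap a b Q) :: sl l'
                     end) l)
  | Par P Q => Par (swap a b P) (swap a b Q)
  | Nu c P => Nu (swap_name a b c) (swap a b P)
  end.

(* Structural congruence. Sums are taken up to reordering of summands,
   which is built into the congruence (rule sc_sum_perm). *)
Inductive scong : proc -> proc -> Prop :=
| sc_refl P : scong P P
| sc_sym P Q : scong P Q -> scong Q P
| sc_trans P Q R : scong P Q -> scong Q R -> scong P R
| sc_sum_ctx l1 l2 a P P' :
    scong P P' -> scong (Sum (l1 ++ (a, P) :: l2)) (Sum (l1 ++ (a, P') :: l2))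
| sc_par_ctx P P' Q Q' : scong P P' -> scong Q Q' -> scong (Par P Q) (Par P' Q')
| sc_nu_ctx a P P' : scong P P' -> scong (Nu a P) (Nu a P')
| sc_sum_perm l l' : Permutation l l' -> scong (Sum l) (Sum l')
| sc_alpha a b P : ~ In b (fn (Nu a P)) -> scong (Nu a P) (Nu b (swap a b P))
| sc_par_comm P Q : scong (Par P Q) (Par Q P)
| sc_par_assoc P Q R : scong (Par (Par P Q) R) (Par P (Par Q R))
| sc_par_unit P : scong (Par P zero) P
| sc_scope a P Q : ~ In a (fn Q) -> scong (Nu a (Par P Q)) (Par (Nu a P) Q)
| sc_nu_zero a : scong (Nu a zero) zero
| sc_nu_comm a b P : scong (Nu a (Nu b P)) (Nu b (Nu a P)).

Inductive lts : proc -> prefix -> proc -> Prop :=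
| lts_pre l1 l2 al P : lts (Sum (l1 ++ (al, P) :: l2)) al P
| lts_res a al P P' : ~ In a (fn_pre al) -> lts P al P' -> lts (Nu a P) al (Nu a P')
| lts_par al P P' Q : lts P al P' -> lts (Par P Q) al (Par P' Q)
| lts_syn c P P' Q Q' : lts P (pout c) P' -> lts Q (pin c) Q' ->
    lts (Par P Q) ptau (Par P' Q')
| lts_str al P Q P' Q' : scong P Q -> scong P' Q' -> lts P al P' -> lts Q al Q'.

(* The CCS dialgebra reaction relations: red1 P R is "P -> R",
   red2 P Q R is "(P,Q) -> R". *)
Inductive red1 : proc -> proc -> Prop :=
| r_tau l1 l2 P : red1 (Sum (l1 ++ (ptau, P) :: l2)) P
| r_res a P P' : red1 P P' -> red1 (Nu a P) (Nu a P')
| r_par1 P P' Q : red1 P P' -> red1 (Par P Q) (Par P' Q)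
| r_int P Q R : red2 P Q R -> red1 (Par P Q) R
| r_str1 P Q R S : red1 P R -> scong P Q -> scong R S -> red1 Q S
with red2 : proc -> proc -> proc -> Prop :=
| r_hid a P Q R : red2 P Q R -> ~ In a (fn Q) -> red2 (Nu a P) Q (Nu a R)
| r_par2 P Q R S : red2 P Q R -> red2 (Par P S) Q (Par S R)
| r_syn a l1 l2 m1 m2 P Q :
    red2 (Sum (l1 ++ (pout a, P) :: l2)) (Sum (m1 ++ (pin a, Q) :: m2)) (Par P Q)
| r_sym P Q R : red2 P Q R -> red2 Q P R
| r_str2 P Q R S T U :
    red2 P Q R -> scong P S -> scong Q T -> scong R U -> red2 S T U.

(* Main.v *)
Require Import Defs.
From Stdlib Require Import List Permutation Arith.
From Stdlib Require Import List Permutation Arith Lia.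
Import ListNotations.

Ltac swt := unfold swap_name; repeat (match goal with |- context [Nat.eqb ?u ?v] => is_var u; is_var v; destruct (Nat.eqb_spec u v); [subst|] end; cbn; try rewrite Nat.eqb_refl); try congruence.

Lemma sw_inv a b c : swap_name a b (swap_name a b c) = c.
Proof. swt. Qed.

Lemma sw_comp x y a b c : swap_name x y (swap_name a b c) =
  swap_name (swap_name x y a) (swap_name x y b) (swap_name x y c).
Proof. swt. Qed.

Lemma sw_fresh a b c : c <> a -> c <> b -> swap_name a b c = c.
Proof. swt. Qed.

Lemma sw_inj a b c d : swap_name a b c = swap_name a b d -> c = d.
Proof. intro H. rewrite <- (sw_inv a b c), <- (sw_inv a b d), H. reflexivity. Qed.

Fixpoint proc_ind2 (Pr : proc -> Prop)
  (Hs : forall l, Forall (fun pq => Pr (snd pq)) l -> Pr (Sum l))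
  (Hp : forall P Q, Pr P -> Pr Q -> Pr (Par P Q))
  (Hn : forall a P, Pr P -> Pr (Nu a P)) (p : proc) : Pr p :=
  match p with
  | Sum l => Hs l ((fix g (l : list (prefix * proc)) : Forall (fun pq => Pr (snd pq)) l :=
                   match l with
                   | [] => Forall_nil _
                   | x :: l' => Forall_cons _ (proc_ind2 Pr Hs Hp Hn (snd x)) (g l')
                   end) l)
  | Par P Q => Hp P Q (proc_ind2 Pr Hs Hp Hn P) (proc_ind2 Pr Hs Hp Hn Q)
  | Nu a P => Hn a P (proc_ind2 Pr Hs Hp Hn P)
  end.

Lemma fn_Sum l : fn (Sum l) = flat_map (fun pq => fn_pre (fst pq) ++ fn (snd pq)) l.
Proof. induction l as [|[p Q] l IH]; simpl; auto. simpl in IH. rewrite IH, app_assoc. reflexivity. Qed.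

Definition swapl a b := fun pq : prefix * proc => (swap_pre a b (fst pq), swap a b (snd pq)).

Lemma swap_Sum a b l : swap a b (Sum l) = Sum (map (swapl a b) l).
Proof. induction l as [|[p Q] l IH]; simpl; auto. simpl in IH. injection IH as IH. rewrite IH. reflexivity. Qed.

Lemma fn_pre_swap a b p : fn_pre (swap_pre a b p) = map (swap_name a b) (fn_pre p).
Proof. destruct p; reflexivity. Qed.

Lemma remove_map_inj f (finj : forall x y, f x = f y -> x = y) c l :
  remove Nat.eq_dec (f c) (map f l) = map f (remove Nat.eq_dec c l).
Proof.
  induction l; simpl; auto.
  destruct (Nat.eq_dec (f c) (f a)) as [e|n]; destruct (Nat.eq_dec c a); subst; simpl; try rewrite IHl; auto.
  apply finj in e; congruence. congruence.
Qed.

Lemma fn_swap a b P : fn (swap a b P) = map (swap_name a b) (fn P).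
Proof.
  induction P using proc_ind2.
  - rewrite swap_Sum, !fn_Sum. induction l as [|[p Q] l IH]; simpl; auto.
    inversion H; subst. rewrite IH by auto. simpl in *. rewrite H2, fn_pre_swap, !map_app. reflexivity.
  - simpl. rewrite IHP1, IHP2, map_app. auto.
  - simpl. rewrite IHP. apply remove_map_inj. apply sw_inj.
Qed.

Lemma swap_comp x y a b P : swap x y (swap a b P) =
  swap (swap_name x y a) (swap_name x y b) (swap x y P).
Proof.
  induction P using proc_ind2.
  - rewrite !swap_Sum, !map_map. f_equal. apply map_ext_in. intros [p Q] Hin.
    rewrite Forall_forall in H. specialize (H _ Hin). simpl in H. unfold swapl; simpl. rewrite H.
    f_equal. destruct p; simpl; auto; rewrite sw_comp; auto.
  - simpl. rewrite IHP1, IHP2; auto.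
  - simpl. rewrite IHP, sw_comp; auto.
Qed.

Lemma In_map_sw a b z l : In (swap_name a b z) (map (swap_name a b) l) <-> In z l.
Proof.
  rewrite in_map_iff. split.
  - intros [w [e h]]. apply sw_inj in e. subst; auto.
  - intros h. exists z; auto.
Qed.

Lemma fn_Nu_swap x y a P : fn (swap x y (Nu a P)) = map (swap_name x y) (fn (Nu a P)).
Proof. apply fn_swap. Qed.

Lemma scong_swap x y P Q : scong P Q -> scong (swap x y P) (swap x y Q).
Proof.
  induction 1.
  - apply sc_refl.
  - apply sc_sym; auto.
  - eapply sc_trans; eauto.
  - rewrite !swap_Sum, !map_app. simpl. apply sc_sum_ctx; auto.
  - simpl; apply sc_par_ctx; auto.
  - simpl; apply sc_nu_ctx; auto.
  - rewrite !swap_Sum. apply sc_sum_perm, Permutation_map; auto.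
  - change (swap x y (Nu a P)) with (Nu (swap_name x y a) (swap x y P)).
    change (swap x y (Nu b (swap a b P))) with (Nu (swap_name x y b) (swap x y (swap a b P))).
    rewrite swap_comp. apply sc_alpha.
    change (Nu (swap_name x y a) (swap x y P)) with (swap x y (Nu a P)).
    rewrite fn_swap, In_map_sw. auto.
  - simpl; apply sc_par_comm.
  - simpl; apply sc_par_assoc.
  - simpl; apply sc_par_unit.
  - simpl. apply sc_scope. rewrite fn_swap, In_map_sw. auto.
  - simpl; apply sc_nu_zero.
  - simpl; apply sc_nu_comm.
Qed.

Lemma scong_fn P Q : scong P Q -> forall z, In z (fn P) <-> In z (fn Q).
Proof.
  induction 1; intro z.
  - tauto.
  - rewrite IHscong; tauto.
  - rewrite IHscong1; auto.
  - rewrite !fn_Sum, !flat_map_app. simpl. rewrite !in_app_iff, IHscong. tauto.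
  - simpl. rewrite !in_app_iff, IHscong1, IHscong2. tauto.
  - simpl. split; intro h; apply in_remove in h; destruct h as [h1 h2];
      apply in_in_remove; auto; apply IHscong; auto.
  - rewrite !fn_Sum, !in_flat_map. split; intros [w [h1 h2]]; exists w; split; auto.
    eapply Permutation_in; eauto. eapply Permutation_in; [apply Permutation_sym|]; eauto.
  - simpl in *. rewrite fn_swap. split; intro h.
    + apply in_remove in h. destruct h as [h1 h2].
      apply in_in_remove.
      * intro e; subst. apply H. apply in_in_remove; auto.
      * assert (z <> b) by (intro e; subst; apply H; apply in_in_remove; auto).
        rewrite <- (sw_inv a b z). rewrite In_map_sw. rewrite sw_fresh; auto.
    + apply in_remove in h. destruct h as [h1 h2].
      rewrite <- (sw_inv a b z) in h1. rewrite In_map_sw in h1.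
      destruct (Nat.eq_dec z a).
      * subst. unfold swap_name in h1. rewrite Nat.eqb_refl in h1.
        exfalso. apply H. apply in_in_remove; auto.
      * rewrite sw_fresh in h1; auto. apply in_in_remove; auto.
  - simpl. rewrite !in_app_iff. tauto.
  - simpl. rewrite !in_app_iff. tauto.
  - simpl. rewrite in_app_iff. simpl. tauto.
  - simpl. rewrite in_app_iff. split; intro h.
    + apply in_remove in h. destruct h as [h1 h2]. rewrite in_app_iff in h1.
      destruct h1; [left; apply in_in_remove|right]; auto.
    + destruct h as [h|h].
      * apply in_remove in h. destruct h. apply in_in_remove; auto. apply in_app_iff; auto.
      * apply in_in_remove. intro e; subst; auto. apply in_app_iff; auto.
  - simpl. tauto.
  - simpl. split; intro h; repeat (apply in_remove in h; destruct h as [h ?]);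
      repeat apply in_in_remove; auto.
Qed.

Definition perm (s : list (chan * chan)) (P : proc) :=
  fold_right (fun ab acc => swap (fst ab) (snd ab) acc) P s.
Definition permn (s : list (chan * chan)) (c : chan) :=
  fold_right (fun ab acc => swap_name (fst ab) (snd ab) acc) c s.
Definition perm_pre (s : list (chan * chan)) (p : prefix) :=
  fold_right (fun ab acc => swap_pre (fst ab) (snd ab) acc) p s.

Lemma perm_Nu s c P : perm s (Nu c P) = Nu (permn s c) (perm s P).
Proof. induction s; simpl; auto. rewrite IHs. reflexivity. Qed.
Lemma perm_Par s P Q : perm s (Par P Q) = Par (perm s P) (perm s Q).
Proof. induction s; simpl; auto. rewrite IHs. reflexivity. Qed.
Lemma perm_Sum s l : perm s (Sum l) = Sum (map (fun pq => (perm_pre s (fst pq), perm s (snd pq))) l).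
Proof.
  induction s; simpl.
  - f_equal. induction l as [|[p Q] l IH]; simpl; f_equal; auto.
  - rewrite IHs, swap_Sum, map_map. reflexivity.
Qed.
Lemma perm_pre_pin s b : perm_pre s (pin b) = pin (permn s b).
Proof. induction s; simpl; auto. rewrite IHs. reflexivity. Qed.
Lemma perm_pre_pout s b : perm_pre s (pout b) = pout (permn s b).
Proof. induction s; simpl; auto. rewrite IHs. reflexivity. Qed.
Lemma perm_pre_tau s : perm_pre s ptau = ptau.
Proof. induction s; simpl; auto. rewrite IHs. reflexivity. Qed.
Lemma fn_perm s P : fn (perm s P) = map (permn s) (fn P).
Proof. induction s; simpl. symmetry; apply map_id. rewrite fn_swap, IHs, map_map. reflexivity. Qed.
Lemma fn_pre_perm s p : fn_pre (perm_pre s p) = map (permn s) (fn_pre p).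
Proof. destruct p; [rewrite perm_pre_tau|rewrite perm_pre_pin|rewrite perm_pre_pout]; reflexivity. Qed.
Lemma permn_inj s c d : permn s c = permn s d -> c = d.
Proof. induction s; simpl; auto. intro h. apply sw_inj in h. auto. Qed.
Lemma scong_perm s P Q : scong P Q -> scong (perm s P) (perm s Q).
Proof. induction s; simpl; auto. intro h. apply scong_swap; auto. Qed.

Lemma swap_pre_fresh a b p : ~ In a (fn_pre p) -> ~ In b (fn_pre p) -> swap_pre a b p = p.
Proof. destruct p; simpl; auto; intros h1 h2; rewrite sw_fresh; auto. Qed.

Lemma fresh (L : list chan) : exists d, ~ In d L.
Proof.
  exists (S (fold_right max 0 L)).
  assert (forall x, In x L -> x <= fold_right max 0 L).
  { induction L; simpl; intros x h; [contradiction|]. destruct h; subst; [lia|]. specialize (IHL _ H). lia. }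
  intro h. apply H in h. lia.
Qed.

Definition co (p : prefix) := match p with ptau => ptau | pin b => pout b | pout b => pin b end.

Lemma sc_par_comm' P Q : scong (Par P Q) (Par Q P). Proof. apply sc_par_comm. Qed.

Lemma fn_Sum_in l1 l2 p Y z : In z (fn Y) -> In z (fn (Sum (l1 ++ (p, Y) :: l2))).
Proof. intro h. rewrite fn_Sum, in_flat_map. exists (p, Y). split. apply in_or_app; simpl; auto. simpl. apply in_or_app; auto. Qed.
Lemma fn_Sum_in_pre l1 l2 p Y z : In z (fn_pre p) -> In z (fn (Sum (l1 ++ (p, Y) :: l2))).
Proof. intro h. rewrite fn_Sum, in_flat_map. exists (p, Y). split. apply in_or_app; simpl; auto. simpl. apply in_or_app; auto. Qed.

Lemma perm_cons c d s P : perm ((c, d) :: s) P = swap c d (perm s P).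
Proof. reflexivity. Qed.
Lemma perm_pre_cons c d s p : perm_pre ((c, d) :: s) p = swap_pre c d (perm_pre s p).
Proof. reflexivity. Qed.

Lemma alpha_back c d P : ~ In d (fn P) -> scong (Nu d (swap c d P)) (Nu c P).
Proof. intro h. apply sc_sym, sc_alpha. simpl. intro h'. apply in_remove in h'. tauto. Qed.

Lemma fresh_pre a s al : ~ In a (fn_pre al) -> ~ In (permn s a) (fn_pre (perm_pre s al)).
Proof. intros h h'. rewrite fn_pre_perm, in_map_iff in h'. destruct h' as [w [e hw]]. apply permn_inj in e. subst; auto. Qed.

Lemma lemD : forall x l x', lts x l x' -> l <> ptau -> forall s m1 m2 Y,
  red2 (perm s x) (Sum (m1 ++ (co (perm_pre s l), Y) :: m2)) (Par (perm s x') Y).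
Proof.
  induction 1 as [l1 l2 al P | a al P P' Ha HP IH | al P P' Q HP IH | c P P' Q Q' _ _ _ _ | al P Q P' Q' HPQ HPQ' HP IH];
    intros Hl s m1 m2 Y.
  - rewrite perm_Sum, map_app. simpl. destruct al as [|b|b]; [congruence| |].
    + rewrite perm_pre_pin. simpl. eapply r_str2. apply r_sym. apply r_syn.
      apply sc_refl. apply sc_refl. apply sc_par_comm.
    + rewrite perm_pre_pout. simpl. apply r_syn.
  - rewrite !perm_Nu.
    destruct (fresh (fn (perm s P) ++ fn (perm s P') ++ fn (Sum (m1 ++ (co (perm_pre s al), Y) :: m2)) ++ fn_pre (perm_pre s al))) as [d Hd].
    rewrite !in_app_iff in Hd.
    assert (Hpl : perm_pre ((permn s a, d) :: s) al = perm_pre s al).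
    { rewrite perm_pre_cons. apply swap_pre_fresh. apply fresh_pre; auto. tauto. }
    specialize (IH Hl ((permn s a, d) :: s) m1 m2 Y). rewrite Hpl, !perm_cons in IH.
    eapply r_str2. apply (r_hid d). exact IH. tauto.
    apply alpha_back; tauto.
    apply sc_refl.
    eapply sc_trans. apply sc_scope. intro h. apply Hd. right; right; left. apply fn_Sum_in; auto.
    apply sc_par_ctx. apply alpha_back; tauto. apply sc_refl.
  - rewrite !perm_Par. eapply r_str2. apply r_par2. apply IH; auto. apply sc_refl. apply sc_refl.
    eapply sc_trans. apply sc_sym, sc_par_assoc. apply sc_par_ctx. apply sc_par_comm. apply sc_refl.
  - congruence.
  - eapply r_str2. apply IH; auto. apply scong_perm; auto. apply sc_refl.
    apply sc_par_ctx. apply scong_perm; auto. apply sc_refl.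
Qed.

Lemma co_co p : co (co p) = p. Proof. destruct p; reflexivity. Qed.
Lemma co_perm_ntau s p : p <> ptau -> co (perm_pre s p) <> ptau.
Proof. destruct p; [congruence| rewrite perm_pre_pin | rewrite perm_pre_pout]; discriminate. Qed.

Lemma lemB : forall y l y', lts y l y' -> l <> ptau -> forall s x x',
  lts x (co (perm_pre s l)) x' -> red2 x (perm s y) (Par x' (perm s y')).
Proof.
  induction 1 as [l1 l2 al P | a al P P' Ha HP IH | al P P' Q HP IH | c P P' Q Q' _ _ _ _ | al P Q P' Q' HPQ HPQ' HP IH];
    intros Hl s x x' Hx.
  - rewrite perm_Sum, map_app. simpl.
    pose proof (lemD _ _ _ Hx (co_perm_ntau s al Hl) [] (map (fun pq => (perm_pre s (fst pq), perm s (snd pq))) l1)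
       (map (fun pq => (perm_pre s (fst pq), perm s (snd pq))) l2) (perm s P)) as H.
    cbn [perm perm_pre fold_right] in H. rewrite co_co in H. exact H.
  - rewrite !perm_Nu.
    destruct (fresh (fn x ++ fn x' ++ fn (perm s P) ++ fn (perm s P') ++ fn_pre (perm_pre s al))) as [d Hd].
    rewrite !in_app_iff in Hd.
    assert (Hpl : perm_pre ((permn s a, d) :: s) al = perm_pre s al).
    { rewrite perm_pre_cons. apply swap_pre_fresh. apply fresh_pre; auto. tauto. }
    rewrite <- Hpl in Hx.
    specialize (IH Hl ((permn s a, d) :: s) x x' Hx). rewrite !perm_cons in IH.
    eapply r_str2. apply r_sym. apply (r_hid d). apply r_sym. exact IH. tauto.
    apply sc_refl. apply alpha_back; tauto.
    eapply sc_trans. apply sc_nu_ctx. apply sc_par_comm.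
    eapply sc_trans. apply sc_scope. tauto.
    eapply sc_trans. apply sc_par_comm.
    apply sc_par_ctx. apply sc_refl. apply alpha_back; tauto.
  - rewrite !perm_Par. eapply r_str2. apply r_sym. apply r_par2. apply r_sym. exact (IH Hl s x x' Hx).
    apply sc_refl. apply sc_refl.
    eapply sc_trans. apply sc_par_comm. apply sc_par_assoc.
  - congruence.
  - eapply r_str2. exact (IH Hl s x x' Hx). apply sc_refl. apply scong_perm; auto.
    apply sc_par_ctx. apply sc_refl. apply scong_perm; auto.
Qed.

Lemma syn_red2 x y l x' y' : l <> ptau -> lts y l y' -> lts x (co l) x' -> red2 x y (Par x' y').
Proof. intros Hl Hy Hx. exact (lemB _ _ _ Hy Hl [] x x' Hx). Qed.

Lemma lts_fn P l P' : lts P l P' ->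
  (forall z, In z (fn P') -> In z (fn P)) /\ (forall z, In z (fn_pre l) -> In z (fn P)).
Proof.
  induction 1 as [l1 l2 al P | a al P P' Ha HP IH | al P P' Q HP IH | c P P' Q Q' HP IHP HQ IHQ | al P Q P' Q' HPQ HPQ' HP IH].
  - split; intros z h; [apply fn_Sum_in|apply fn_Sum_in_pre]; auto.
  - destruct IH as [I1 I2]. split; intros z h; simpl in *.
    + apply in_remove in h. destruct h. apply in_in_remove; auto.
    + apply in_in_remove; auto. intro e; subst; auto.
  - destruct IH as [I1 I2]. split; intros z h; simpl in *; rewrite in_app_iff in *; try tauto.
    all: try (destruct h; auto).  all: left; auto.
  - destruct IHP as [I1 _]; destruct IHQ as [J1 _]. split; intros z h; simpl in *; try tauto.
    rewrite in_app_iff in *. destruct h; auto.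
  - destruct IH as [I1 I2]. split; intros z h.
    + apply (scong_fn _ _ HPQ), I1, (scong_fn _ _ HPQ'); auto.
    + apply (scong_fn _ _ HPQ), I2; auto.
Qed.

Lemma red2_sound x y z : red2 x y z -> exists (b : chan) (x' y' : proc), scong z (Par x' y') /\
       ((lts x (pin b) x' /\ lts y (pout b) y') \/
        (lts x (pout b) x' /\ lts y (pin b) y')).
Proof.
  induction 1 as [a P Q R H IH Ha | P Q R S H IH | a l1 l2 m1 m2 P Q | P Q R H IH | P Q R S T U H IH HS HT HU].
  - destruct IH as [b [x' [y' [Hs Hd]]]].
    assert (Hy : forall l, lts Q l y' -> ~ In a (fn y') /\ ~ In a (fn_pre l)).
    { intros l hl. apply lts_fn in hl. destruct hl as [h1 h2]. split; intro h; apply Ha; auto. }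
    exists b, (Nu a x'), y'. split.
    + eapply sc_trans. apply sc_nu_ctx, Hs. apply sc_scope.
      destruct Hd as [[_ h]|[_ h]]; apply Hy in h; tauto.
    + destruct Hd as [[h1 h]|[h1 h]]; [left|right]; split; auto; apply lts_res; auto;
        apply Hy in h; simpl in *; tauto.
  - destruct IH as [b [x' [y' [Hs Hd]]]].
    exists b, (Par x' S), y'. split.
    + eapply sc_trans. apply sc_par_ctx. apply sc_refl. exact Hs.
      eapply sc_trans. apply sc_sym, sc_par_assoc. apply sc_par_ctx. apply sc_par_comm. apply sc_refl.
    + destruct Hd as [[h1 h]|[h1 h]]; [left|right]; split; auto; apply lts_par; auto.
  - exists a, P, Q. split. apply sc_refl. right. split; apply lts_pre.
  - destruct IH as [b [x' [y' [Hs Hd]]]].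
    exists b, y', x'. split. eapply sc_trans. exact Hs. apply sc_par_comm. tauto.
  - destruct IH as [b [x' [y' [Hs Hd]]]].
    exists b, x', y'. split. eapply sc_trans. apply sc_sym, HU. exact Hs.
    destruct Hd as [[h1 h]|[h1 h]]; [left|right]; split; eapply lts_str; eauto; apply sc_refl.
Qed.

Fixpoint cnt (f : prefix -> nat) (P : proc) : nat :=
  match P with
  | Sum l => (fix g (l : list (prefix * proc)) : nat :=
               match l with [] => 0 | (p, Q) :: l' => f p + cnt f Q + g l' end) l
  | Par P Q => cnt f P + cnt f Q
  | Nu _ P => cnt f P
  end.

Lemma cnt_Sum f l : cnt f (Sum l) = list_sum (map (fun pq => f (fst pq) + cnt f (snd pq)) l).
Proof. induction l as [|[p Q] l IH]; simpl; auto. Qed.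

Lemma perm_list_sum (l l' : list nat) : Permutation l l' -> list_sum l = list_sum l'.
Proof. induction 1; simpl; lia. Qed.

Section Cnt.
Variable f : prefix -> nat.
Hypothesis Hf : forall a b p, f (swap_pre a b p) = f p.

Lemma cnt_swap a b P : cnt f (swap a b P) = cnt f P.
Proof.
  induction P using proc_ind2.
  - rewrite swap_Sum, !cnt_Sum, map_map. f_equal. apply map_ext_in. intros [p Q] h.
    rewrite Forall_forall in H. specialize (H _ h). simpl in *. rewrite H, Hf. auto.
  - simpl. lia.
  - simpl. auto.
Qed.

Lemma cnt_scong P Q : scong P Q -> cnt f P = cnt f Q.
Proof.
  induction 1; try (simpl; lia).
  - rewrite !cnt_Sum, !map_app, !list_sum_app. simpl. lia.
  - rewrite !cnt_Sum. apply perm_list_sum, Permutation_map; auto.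
  - simpl. rewrite cnt_swap. auto.
Qed.

Lemma cnt_lts P l P' : lts P l P' -> cnt f P' + f l <= cnt f P \/
  (exists c, l = ptau /\ cnt f P' + f (pout c) + f (pin c) <= cnt f P).
Proof.
  induction 1 as [l1 l2 al P | a al P P' Ha HP IH | al P P' Q HP IH | c P P' Q Q' HP IHP HQ IHQ | al P Q P' Q' HPQ HPQ' HP IH].
  - left. rewrite cnt_Sum, map_app, list_sum_app. simpl. lia.
  - simpl. auto.
  - simpl. destruct IH as [h|[c [e h]]]; [left; lia|right; exists c; split; auto; lia].
  - right. exists c. split; auto. simpl.
    destruct IHP as [h|[c' [e h]]]; [|discriminate].
    destruct IHQ as [h'|[c'' [e h']]]; [|discriminate]. lia.
  - rewrite <- (cnt_scong _ _ HPQ), <- (cnt_scong _ _ HPQ'). auto.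
Qed.
End Cnt.

Lemma cnt_zero P : cnt (fun _ => 1) P = 0 -> scong P zero.
Proof.
  induction P; intro H.
  - destruct l as [|[p Q] l]. apply sc_refl. simpl in H. lia.
  - simpl in H. eapply sc_trans. apply sc_par_ctx. apply IHP1; lia. apply IHP2; lia. apply sc_par_unit.
  - simpl in H. eapply sc_trans. apply sc_nu_ctx, IHP; auto. apply sc_nu_zero.
Qed.

Definition opp_kind (p0 p : prefix) : nat :=
  match p, p0 with ptau, _ => 1 | pin _, pout _ => 1 | pout _, pin _ => 1 | _, _ => 0 end.

Lemma inv_pre (p0 : prefix) l Y : p0 <> ptau -> lts (pre p0 zero) l Y -> l = p0 /\ scong Y zero.
Proof.
  intros Hp0 H.
  assert (Hf1 : forall a b p, opp_kind p0 (swap_pre a b p) = opp_kind p0 p) by (destruct p; reflexivity).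
  assert (Hf2 : forall a b (p : prefix), (fun _ : prefix => 1) (swap_pre a b p) = (fun _ => 1) p) by reflexivity.
  pose proof (cnt_lts _ Hf1 _ _ _ H) as C1.
  pose proof (cnt_lts _ Hf2 _ _ _ H) as C2.
  pose proof (lts_fn _ _ _ H) as [_ F].
  assert (Hl : exists c, (l = pin c \/ l = pout c)).
  { destruct l as [|c|c]; eauto.
    exfalso. destruct C1 as [h|[c [_ h]]]; destruct p0; simpl in h; try lia; congruence. }
  destruct Hl as [c Hl].
  assert (Hc : p0 = pin c \/ p0 = pout c).
  { destruct p0 as [|a|a]; [congruence| |];
    assert (In c (fn (pre (pin a) zero)) \/ In c (fn (pre (pout a) zero))) as Hin by
      (destruct Hl; subst; simpl in *; auto);
    simpl in Hin; destruct Hin as [[e|[]]|[e|[]]]; subst; auto. }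
  destruct C2 as [h|[c' [e h]]]; [|destruct Hl; subst; discriminate].
  simpl in h.
  split; [|apply cnt_zero; lia].
  destruct Hl, Hc; subst; auto; exfalso; destruct C1 as [h'|[c' [e h']]]; simpl in h'; try lia; discriminate.
Qed.

Lemma tau_red1 x l y : lts x l y -> l = ptau -> red1 x y.
Proof.
  induction 1 as [l1 l2 al P | a al P P' Ha HP IH | al P P' Q HP IH | c P P' Q Q' HP IHP HQ IHQ | al P Q P' Q' HPQ HPQ' HP IH]; intro e; subst.
  - apply r_tau.
  - apply r_res; auto.
  - apply r_par1; auto.
  - apply r_int. apply (syn_red2 P Q (pin c) P' Q'); auto; discriminate.
  - eapply r_str1; eauto.
Qed.

Lemma red1_tau x y : red1 x y -> lts x ptau y.
Proof.
  induction 1 as [l1 l2 P | a P P' H IH | P P' Q H IH | P Q R H | P Q R S H IH HPQ HRS].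
  - apply lts_pre.
  - apply lts_res; auto.
  - apply lts_par; auto.
  - apply red2_sound in H. destruct H as [b [x' [y' [Hs [[h1 h2]|[h1 h2]]]]]].
    + eapply lts_str. apply sc_par_comm. apply sc_sym. eapply sc_trans. exact Hs. apply sc_par_comm.
      apply (lts_syn b); auto.
    + eapply lts_str. apply sc_refl. apply sc_sym, Hs. apply (lts_syn b); auto.
  - eapply lts_str; eauto.
Qed.

Lemma half (p0 : prefix) x y : p0 <> ptau ->
  (lts x (co p0) y <-> red2 x (pre p0 zero) y).
Proof.
  intro Hp0. split; intro H.
  - eapply r_str2. apply (syn_red2 x (pre p0 zero) p0 y zero); auto. exact (lts_pre [] [] p0 zero).
    apply sc_refl. apply sc_refl. apply sc_par_unit.
  - apply red2_sound in H. destruct H as [b [x' [y' [Hs Hd]]]].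
    assert (Hx : lts x (co p0) x' /\ scong y' zero).
    { destruct Hd as [[h1 h2]|[h1 h2]]; destruct (inv_pre _ _ _ Hp0 h2) as [e hz]; rewrite <- e; auto. }
    destruct Hx as [h1 hz].
    eapply lts_str. apply sc_refl. 2: exact h1.
    apply sc_sym; eapply sc_trans. exact Hs. eapply sc_trans. apply sc_par_ctx. apply sc_refl. exact hz. apply sc_par_unit.
Qed.

Theorem lemma1 : forall (a : chan) (x y z : proc),
  (lts x ptau y <-> red1 x y) /\
  (lts x (pin a) y <-> red2 x (pre (pout a) zero) y) /\
  (lts x (pout a) y <-> red2 x (pre (pin a) zero) y) /\
  (red2 x y z <->
     exists (b : chan) (x' y' : proc), scong z (Par x' y') /\
       ((lts x (pin b) x' /\ lts y (pout b) y') \/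
        (lts x (pout b) x' /\ lts y (pin b) y'))).
Proof.
  intros a x y z. split; [|split; [|split]].
  - split. intro h; apply (tau_red1 x ptau y); auto. apply red1_tau.
  - apply (half (pout a)); discriminate.
  - apply (half (pin a)); discriminate.
  - split. apply red2_sound.
    intros [b [x' [y' [Hs [[h1 h2]|[h1 h2]]]]]].
    + eapply r_str2. apply (syn_red2 x y (pout b) x' y'); auto; discriminate.
      apply sc_refl. apply sc_refl. apply sc_sym, Hs.
    + eapply r_str2. apply (syn_red2 x y (pin b) x' y'); auto; discriminate.
      apply sc_refl. apply sc_refl. apply sc_sym, Hs.
Qed.
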